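(* Let $G$ be a connected simple graph with at least $3$ vertices and let $v\in V(G)$ be a vertex that is not a cut vertex of $G$. Then $$\chi_{dom}(G)-1\leq \chi_{dom}(G-v)\leq \chi_{dom}(G)+\deg v-1.$$
   Context: All graphs are finite and simple. A dominated coloring (dom-coloring) of a graph $H$ is a proper vertex coloring of $H$ such that for every color class $C$ there is a vertex $x\in V(H)$ adjacent to every vertex of $C$ (i.e. $C\subseteq N_H(x)$). The dominated chromatic number $\chi_{dom}(H)$ is the minimum number of colors in a dominated coloring of $H$. $G-v$ denotes the graph obtained from $G$ by deleting $v$ and all edges incident with $v$; $\deg v$ is the degree of $v$ in $G$. *)

(* Defs.v *)
From mathcomp Require Import all_boot.
Set Implicit Arguments. Unset Strict Implicit. Unset Printing Implicit Defensive.

(* Induced subgraphs are handled by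
   carrying an explicit vertex set S : {set T}; the graph "G[S]" has vertex
   set S and edges e restricted to S.  G itself is G[setT], and G - v is
   G[setT :\ v]. *)

Definition simple_graph (T : finType) (e : rel T) : Prop :=
  symmetric e /\ irreflexive e.

Definition induced_rel (T : finType) (e : rel T) (S : {set T}) : rel T :=
  fun x y => [&& x \in S, y \in S & e x y].

Definition connected_on (T : finType) (e : rel T) (S : {set T}) : Prop :=
  forall x y, x \in S -> y \in S -> connect (induced_rel e S) x y.

Definition cut_vertex (T : finType) (e : rel T) (S : {set T}) (v : T) : Prop :=
  v \in S /\ ~ connected_on e (S :\ v).

Definition deg (T : finType) (e : rel T) (S : {set T}) (v : T) : nat :=
  #|[set u in S | e v u]|.

Definition dom_coloringb (T : finType) (e : rel T) (S : {set T}) (k : nat)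
    (c : {ffun T -> 'I_k}) : bool :=
  [forall x in S, forall y in S, e x y ==> (c x != c y)] &&
  [forall i : 'I_k, exists x in S,
      forall y in S, (c y == i) ==> e x y].

Definition dom_colorable (T : finType) (e : rel T) (S : {set T}) (k : nat) : bool :=
  [exists c : {ffun T -> 'I_k}, dom_coloringb e S c].

(* dominated chromatic number: the least k such that G[S] has a dominated
   coloring with k colors (searched among 0..#|T|; every graph without
   isolated vertices has one with at most #|S| <= #|T| colors). *)
Definition chi_dom (T : finType) (e : rel T) (S : {set T}) : nat :=
  find (dom_colorable e S) (iota 0 #|T|.+1).

(* Main.v *)
Require Import Defs.
From mathcomp Require Import all_boot.
From mathcomp Require Import zify.
From Stdlib Require Import Classical.

Section Aux.
Variables (T : finType) (e : rel T).

Lemma col_nat (S : {set T}) k : dom_colorable e S k -> exists f : T -> nat,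
  [/\ forall y, f y < k,
      forall x y, x \in S -> y \in S -> e x y -> f x != f y &
      forall i, i < k -> exists2 x, x \in S & forall y, y \in S -> f y = i -> e x y].
Proof.
case/existsP => c /andP[/forallP Hp /forallP Hd].
exists (fun y => val (c y)); split.
- by move=> y; exact: ltn_ord.
- move=> x y xS yS exy.
  have := Hp x; rewrite xS /= => /forallP/(_ y); rewrite yS /= exy /= => cne.
  apply/eqP => h; move/eqP: cne; apply; exact: val_inj.
- move=> i ilt. have := Hd (Ordinal ilt) => /existsP [x /andP[xS /forallP H]].
  exists x => // y yS fy. have := H y; rewrite yS /= => /implyP; apply.
  apply/eqP; apply: val_inj; exact: fy.
Qed.

Lemma nat_col (S : {set T}) k (f : T -> nat) : 0 < k -> (forall y, y \in S -> f y < k) ->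
  (forall x y, x \in S -> y \in S -> e x y -> f x != f y) ->
  (forall i, i < k -> exists2 x, x \in S & forall y, y \in S -> f y = i -> e x y) ->
  dom_colorable e S k.
Proof.
case: k => // k _ Hb Hp Hd. apply/existsP.
exists (finfun (fun y => inord (f y) : 'I_k.+1)). apply/andP; split.
- apply/forallP => x; apply/implyP => xS; apply/forallP => y; apply/implyP => yS.
  apply/implyP => exy. rewrite !ffunE. apply/eqP => h.
  have := congr1 (@nat_of_ord _) h; rewrite /= !inordK ?Hb // => h'.
  by move: (Hp x y xS yS exy); rewrite h' eqxx.
- apply/forallP => i. have [x xS Hx] := Hd i (ltn_ord i).
  apply/existsP; exists x; apply/andP; split => //.
  apply/forall_inP => y yS; apply/implyP; rewrite ffunE => /eqP h.
  apply (Hx y yS). have := congr1 (@nat_of_ord _) h; rewrite /= inordK //. exact: Hb yS.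
Qed.

Lemma chi_le (S : {set T}) k : dom_colorable e S k -> k <= #|T| -> chi_dom e S <= k.
Proof.
move=> Hc Hk. rewrite /chi_dom. case: leqP => // H.
have := before_find 0 H. rewrite nth_iota ?add0n ?Hc //.
Qed.

Lemma chi_col (S : {set T}) : dom_colorable e S #|T| -> dom_colorable e S (chi_dom e S).
Proof.
move=> Hc. have Hh : has (dom_colorable e S) (iota 0 #|T|.+1).
  apply/hasP; exists #|T|; [rewrite mem_iota; lia | exact: Hc].
have := nth_find 0 Hh. rewrite nth_iota ?add0n //.
by rewrite -[X in _ < X](size_iota 0 #|T|.+1) -has_find.
Qed.

Lemma nbr (S : {set T}) : symmetric e -> connected_on e S -> 1 < #|S| ->
  forall y, y \in S -> exists2 x, x \in S & e x y.
Proof.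
move=> sym Hc HS y yS.
have : 0 < #|S :\ y| by move: HS; rewrite (cardsD1 y S) yS.
case/card_gt0P => z; rewrite in_setD1 => /andP[zy zS].
have := Hc y z yS zS. case/connectP => [[|x p]] /=; first by move=> _ h; rewrite h eqxx in zy.
case/andP => /and3P[_ xS exy] _ _. by exists x => //; rewrite sym.
Qed.

Lemma col_inj (S : {set T}) k (f : T -> nat) : 0 < k -> (forall y, y \in S -> f y < k) ->
  {in S &, injective f} -> irreflexive e -> (exists y, y \in S) ->
  (forall y, y \in S -> exists2 x, x \in S & e x y) -> dom_colorable e S k.
Proof.
move=> k0 Hb Hi irr [s sS] Hn. apply: (@nat_col S k f) => //.
- move=> x y xS yS exy; apply/eqP => h. have := Hi x y xS yS h => xy.
  by rewrite xy irr in exy.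
- move=> i _. case: (boolP [exists y in S, f y == i]).
  + case/existsP => y0 /andP[y0S /eqP fy0]. have [x xS exy] := Hn y0 y0S.
    exists x => // y yS fy. have -> // : y = y0 by apply: Hi => //; rewrite fy fy0.
  + move=> /existsPn H. exists s => // y yS fy. by move: (H y); rewrite yS fy eqxx.
Qed.

End Aux.

Lemma ar1 i K a : i < K + (a + 1) - 1 -> K <= i -> i - K < a.
Proof. lia. Qed.


Theorem theorem2p2 (T : finType) (e : rel T) (v : T) :
  simple_graph e ->
  connected_on e [set: T] ->
  3 <= #|T| ->
  ~ cut_vertex e [set: T] v ->
  chi_dom e [set: T] - 1 <= chi_dom e ([set: T] :\ v) /\
  chi_dom e ([set: T] :\ v) <= chi_dom e [set: T] + deg e [set: T] v - 1.
Proof.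
move=> [sym irr] conT n3 ncut.
set Sv := [set: T] :\ v.
have conS : connected_on e Sv.
  apply: NNPP => H; apply: ncut; split => //; exact: in_setT.
have cSv : #|Sv| = #|T| - 1 by rewrite /Sv cardsDS ?sub1set ?in_setT // cardsT cards1.
have nbT : forall y, exists2 x, x \in [set: T] & e x y.
  move=> y; apply: (@nbr T e [set: T] sym conT); [rewrite cardsT; lia | exact: in_setT].
have nbS : forall y, y \in Sv -> exists2 x, x \in Sv & e x y.
  apply: (@nbr T e Sv sym conS); lia.
have [w _ ewv] := nbT v.
have evw : e v w by rewrite sym.
have wS : w \in Sv by rewrite /Sv in_setD1 in_setT andbT; apply/eqP => h; rewrite h irr in ewv.
have colT : dom_colorable e [set: T] #|T|.
  apply: (@col_inj _ _ _ _ (fun y => val (enum_rank y))) => //.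
  - lia.
  - by move=> y _; exact: ltn_ord.
  - by move=> x y _ _ /val_inj/enum_rank_inj.
  - by exists v; exact: in_setT.
have colS : dom_colorable e Sv #|T|.
  apply: (@col_inj _ _ _ _ (fun y => val (enum_rank y))) => //.
  - lia.
  - by move=> y _; exact: ltn_ord.
  - by move=> x y _ _ /val_inj/enum_rank_inj.
  - by exists w.
set K := chi_dom e [set: T].
set K' := chi_dom e Sv.
have cK : dom_colorable e [set: T] K by exact: chi_col.
have cK' : dom_colorable e Sv K' by exact: chi_col.
have KT : K <= #|T| by exact: chi_le.
have K'T : K' <= #|T| by exact: chi_le.
split.
-
  have [f [fb fp fd]] := @col_nat T e _ _ cK'.
  have c1 : dom_colorable e [set: T] K'.+1.
    apply: (@nat_col _ _ _ _ (fun y => if y == v then K' else f y)) => //.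
    + by move=> y _; case: eqP => _ //; exact: ltnW (fb y).
    + move=> x y _ _ exy.
      case: (eqVneq x v) => [xv|xv]; case: (eqVneq y v) => [yv|yv].
      * by rewrite xv yv irr in exy.
      * by rewrite neq_ltn fb orbT.
      * by rewrite neq_ltn fb.
      * apply: fp => //; by rewrite /Sv in_setD1 in_setT andbT.
    + move=> i; rewrite ltnS leq_eqVlt => /orP[/eqP ->|ilt].
      * exists w; first exact: in_setT.
        move=> y _. case: eqP => [->//|_ fy]. by have := fb y; rewrite fy ltnn.
      * have [x xS Hx] := fd i ilt. exists x; first exact: in_setT.
        move=> y _. case: eqP => [_ h|yv fy]; first by rewrite h ltnn in ilt.
        apply: Hx fy. by rewrite /Sv in_setD1 in_setT andbT; apply/eqP.
  have : K <= K'.+1.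
    case: (leqP K'.+1 #|T|) => h; first exact: chi_le.
    exact: leq_trans KT (ltnW h).
  lia.
-
  set N := [set u in [set: T] | e v u].
  set N' := N :\ w.
  have wN : w \in N by rewrite inE in_setT.
  have cN : #|N| = #|N'| + 1 by rewrite (cardsD1 w N) wN addnC.
  rewrite /deg -/N.
  have [f [fb fp fd]] := @col_nat T e _ _ cK.
  have K0 : 0 < K by have := fb v; lia.
  set g := fun y => if y \in N' then K + index y (enum N') else f y.
  have idx : forall y, y \in N' -> index y (enum N') < #|N'|.
    by move=> y yN; rewrite cardE index_mem mem_enum.
  have gb : forall y, g y < K + #|N| - 1.
    move=> y; rewrite /g; case: ifP => h; first by have := idx y h; lia.
    by have := fb y; lia.
  have gN : forall y, y \notin N' -> g y = f y by move=> y /negbTE h; rewrite /g h.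
  have c2 : dom_colorable e Sv (K + #|N| - 1).
    apply: (@nat_col _ _ _ _ g) => //; first lia.
    + move=> x y xS yS exy.
      case: (boolP (x \in N')) => hx; case: (boolP (y \in N')) => hy.
      * rewrite /g hx hy. apply/eqP => h.
        have h' : index x (enum N') = index y (enum N') by move/eqP: h; rewrite eqn_add2l => /eqP.
        have : x = y.
          have hx' : x \in enum N' by rewrite mem_enum.
          have hy' : y \in enum N' by rewrite mem_enum.
          by rewrite -[LHS](nth_index x hx') h' (nth_index x hy').
        by move=> xy; rewrite xy irr in exy.
      * rewrite (gN y hy) /g hx. by rewrite neq_ltn (ltn_addr _ (fb y)) orbT.
      * rewrite (gN x hx) /g hy. by rewrite neq_ltn (ltn_addr _ (fb x)).
      * rewrite (gN x hx) (gN y hy). exact: fp.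
    + move=> i ilt. case: (leqP K i) => Ki.
      * have jlt : i - K < size (enum N').
          rewrite -cardE; move: ilt Ki; rewrite cN; exact: ar1.
        set u := nth w (enum N') (i - K).
        have uN : u \in N' by rewrite -mem_enum mem_nth.
        have uS : u \in Sv.
          move: uN; rewrite /N' !inE => /andP[_ evu].
          rewrite andbT; apply/eqP => h; by rewrite h irr in evu.
        have [x xS exu] := nbS u uS. exists x => // y yS gy.
        have yN : y \in N'.
          apply: contraT => h; move: gy; rewrite (gN y h) => fy.
          by have := fb y; rewrite fy ltnNge Ki.
        move: gy; rewrite /g yN => gy.
        have : y = u.
          have hy' : y \in enum N' by rewrite mem_enum.
          rewrite /u -[LHS](nth_index w hy'). congr nth. by rewrite -gy addKn.
        by move=> ->.
      * have [x _ Hx] := fd i Ki.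
        case: (eqVneq x v) => [xv|xv].
        -- have [z zS ezw] := nbS w wS. exists z => // y yS gy.
           have yN : y \notin N'.
             apply/negP => h; move: gy; rewrite /g h => gy; by move: Ki; rewrite -gy ltnNge leq_addr.
           move: gy; rewrite (gN y yN) => fy.
           have evy : e v y by rewrite -xv; apply: Hx => //; exact: in_setT.
           have : y = w.
             apply: contraNeq yN => yw. by rewrite /N' !inE evy yw.
           by move=> ->.
        -- exists x; first by rewrite /Sv in_setD1 in_setT andbT.
           move=> y yS gy. have yN : y \notin N'.
             apply/negP => h; move: gy; rewrite /g h => gy; by move: Ki; rewrite -gy ltnNge leq_addr.
           move: gy; rewrite (gN y yN) => fy. apply: Hx fy; exact: in_setT.
  case: (leqP (K + #|N| - 1) #|T|) => h; first exact: chi_le.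
  exact: leq_trans K'T (ltnW h).
Qed.
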